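(* If $\mathcal{M}=((X,\mathcal{C}_R),\mathcal{V})$ is a quasi-discrete closure model, then for all $x_1,x_2\in X$, $x_1\simeq x_2$ implies $x_1\equiv_{SLCS}x_2$.
   Context: Quasi-discrete closure model: $\mathcal{C}_R(A)=A\cup\{x\mid\exists a\in A.\ aRx\}$, $\vec{\mathcal{C}}(x)=\mathcal{C}_R(\{x\})$, $\overleftarrow{\mathcal{C}}(x)=\mathcal{C}_{R^{-1}}(\{x\})$, $\mathcal{V}:AP\to\mathcal{P}(X)$, $\mathcal{V}^{-1}(x)=\{p\mid x\in\mathcal{V}(p)\}$. A path is a function $\pi:\mathbb{N}\to X$ that is continuous from $(\mathbb{N},\mathcal{C}_{succ})$ (closure based on $n\mapsto n+1$) to $(X,\mathcal{C}_R)$, i.e. $\pi[\mathcal{C}_{succ}(N)]\subseteq\mathcal{C}_R(\pi[N])$ for all $N\subseteq\mathbb{N}$. SLCS formulas: $\Phi::=p\mid\neg\Phi\mid\Phi\lor\Phi\mid\vec\rho\,\Phi_1[\Phi_2]\mid\overleftarrow\rho\,\Phi_1[\Phi_2]$; $x\models\vec\rho\,\Phi_1[\Phi_2]$ iff there are a path $\pi$ and $\ell$ with $\pi(0)=x$, $\pi(\ell)\models\Phi_1$, $\pi(j)\models\Phi_2$ for $0<j<\ell$; $x\models\overleftarrow\rho\,\Phi_1[\Phi_2]$ iff there are a path $\pi$ and $\ell$ with $\pi(\ell)=x$, $\pi(0)\models\Phi_1$, $\pi(j)\models\Phi_2$ for $0<j<\ell$; atoms and Boolean connectives as usual. $\equiv_{SLCS}$: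 satisfying the same SLCS formulas. $\simeq$: union of all non-empty equivalence relations $B$ with $(x_1,x_2)\in B\Rightarrow\mathcal{V}^{-1}(x_1)=\mathcal{V}^{-1}(x_2)$ and for all $C\in X/B$, $\vec{\mathcal{C}}(x_1)\cap C\neq\emptyset\iff\vec{\mathcal{C}}(x_2)\cap C\neq\emptyset$ and $\overleftarrow{\mathcal{C}}(x_1)\cap C\neq\emptyset\iff\overleftarrow{\mathcal{C}}(x_2)\cap C\neq\emptyset$. *)

(* Defs.v *)
From Stdlib Require Import Arith.

Set Implicit Arguments.

Definition closR {X : Type} (R : X -> X -> Prop) (A : X -> Prop) : X -> Prop :=
  fun x => A x \/ exists a, A a /\ R a x.

Definition img {A B : Type} (f : A -> B) (N : A -> Prop) : B -> Prop :=
  fun y => exists n, N n /\ f n = y.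

Definition sing {X : Type} (x : X) : X -> Prop := fun y => y = x.

Definition inv {X : Type} (R : X -> X -> Prop) : X -> X -> Prop := fun x y => R y x.

Definition fwdC {X : Type} (R : X -> X -> Prop) (x : X) : X -> Prop := closR R (sing x).
Definition bwdC {X : Type} (R : X -> X -> Prop) (x : X) : X -> Prop := closR (inv R) (sing x).

Definition succR : nat -> nat -> Prop := fun n m => m = S n.

(** A path: continuous function (N, C_succ) -> (X, C_R). *)
Definition is_path {X : Type} (R : X -> X -> Prop) (pi : nat -> X) : Prop :=
  forall (N : nat -> Prop) (y : X),
    img pi (closR succR N) y -> closR R (img pi N) y.

Inductive form (AP : Type) : Type :=
| FAtom : AP -> form AP
| FNot : form AP -> form AP
| FOr : form AP -> form AP -> form AP
| FRhoF : form AP -> form AP -> form AP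
| FRhoB : form AP -> form AP -> form AP.

Fixpoint sat {X AP : Type} (R : X -> X -> Prop) (V : AP -> X -> Prop)
  (x : X) (phi : form AP) : Prop :=
  match phi with
  | FAtom p => V p x
  | FNot f => ~ sat R V x f
  | FOr f g => sat R V x f \/ sat R V x g
  | FRhoF f g => exists (pi : nat -> X) (l : nat),
      is_path R pi /\ pi 0 = x /\ sat R V (pi l) f /\
      (forall j, 0 < j -> j < l -> sat R V (pi j) g)
  | FRhoB f g => exists (pi : nat -> X) (l : nat),
      is_path R pi /\ pi l = x /\ sat R V (pi 0) f /\
      (forall j, 0 < j -> j < l -> sat R V (pi j) g)
  end.

Definition slcs_equiv {X AP : Type} (R : X -> X -> Prop) (V : AP -> X -> Prop)
  (x1 x2 : X) : Prop :=
  forall phi : form AP, sat R V x1 phi <-> sat R V x2 phi.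

Definition is_equiv {X : Type} (B : X -> X -> Prop) : Prop :=
  (forall x, B x x) /\ (forall x y, B x y -> B y x) /\
  (forall x y z, B x y -> B y z -> B x z).

(** The class C = [y]_B ∈ X/B meets the set S. *)
Definition meets_class {X : Type} (B : X -> X -> Prop) (S : X -> Prop) (y : X) : Prop :=
  exists z, S z /\ B y z.

Definition is_bisim {X AP : Type} (R : X -> X -> Prop) (V : AP -> X -> Prop)
  (B : X -> X -> Prop) : Prop :=
  (exists x y, B x y) /\ is_equiv B /\
  forall x1 x2, B x1 x2 ->
    (forall p : AP, V p x1 <-> V p x2) /\
    (forall y : X,
       (meets_class B (fwdC R x1) y <-> meets_class B (fwdC R x2) y) /\
       (meets_class B (bwdC R x1) y <-> meets_class B (bwdC R x2) y)).

Definition bisimilar {X AP : Type} (R : X -> X -> Prop) (V : AP -> X -> Prop)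
  (x1 x2 : X) : Prop :=
  exists B, is_bisim R V B /\ B x1 x2.

(* Main.v *)
Require Import Defs.
From Stdlib Require Import Arith Lia.

Definition lstep {X : Type} (R : X -> X -> Prop) (a b : X) := b = a \/ R a b.

Lemma path_local {X : Type} (R : X -> X -> Prop) pi :
  is_path R pi -> forall n, lstep R (pi n) (pi (S n)).
Proof.
  intros H n. destruct (H (sing n) (pi (S n))) as [[m [Hm E]]|[b [[m [Hm E]] Hr]]].
  - exists (S n). split; [right; exists n; split; reflexivity|reflexivity].
  - unfold sing in Hm; subst. left; auto.
  - unfold sing in Hm; subst. right; auto.
Qed.

Lemma local_path {X : Type} (R : X -> X -> Prop) pi :
  (forall n, lstep R (pi n) (pi (S n))) -> is_path R pi.
Proof.
  intros H N y [n [[Hn|[a [Ha E]]] Ey]].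
  - left. exists n; auto.
  - unfold succR in E. subst n. destruct (H a) as [E|E].
    + left. exists a. split; auto. congruence.
    + right. exists (pi a). split; [exists a; auto|]. subst y; auto.
Qed.

Lemma fwd_step {X AP : Type} (R : X -> X -> Prop) (V : AP -> X -> Prop) B :
  is_bisim R V B -> forall a b c, B a b -> lstep R a c ->
  exists z, lstep R b z /\ B c z.
Proof.
  intros [_ [[Hr [Hs Ht]] HB]] a b c Hab Hac.
  destruct (HB a b Hab) as [_ Hy]. destruct (Hy c) as [[H1 _] _].
  destruct H1 as [z [Hz Hcz]].
  - exists c. split; auto. destruct Hac as [E|E]; [left; exact E|right; exists a; split; [reflexivity|exact E]].
  - exists z. split; auto. destruct Hz as [E|[d [Ed E]]]; [left; exact E|right; unfold sing in Ed; subst; exact E].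
Qed.

Lemma bwd_step {X AP : Type} (R : X -> X -> Prop) (V : AP -> X -> Prop) B :
  is_bisim R V B -> forall a b c, B a b -> lstep R c a ->
  exists z, lstep R z b /\ B c z.
Proof.
  intros [_ [[Hr [Hs Ht]] HB]] a b c Hab Hac.
  destruct (HB a b Hab) as [_ Hy]. destruct (Hy c) as [_ [H1 _]].
  destruct H1 as [z [Hz Hcz]].
  - exists c. split; auto. destruct Hac as [E|E]; [left; symmetry; exact E|right; exists a; split; [reflexivity|exact E]].
  - exists z. split; auto. destruct Hz as [E|[d [Ed E]]].
    + unfold sing in E. left. symmetry; exact E.
    + right; unfold sing in Ed; subst; exact E.
Qed.

Lemma fwd_build {X AP : Type} (R : X -> X -> Prop) (V : AP -> X -> Prop) B :
  is_bisim R V B -> forall pi, is_path R pi -> forall x2, B (pi 0) x2 ->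
  forall n, exists pi', is_path R pi' /\ pi' 0 = x2 /\ forall k, k <= n -> B (pi k) (pi' k).
Proof.
  intros HB pi Hp x2 H0 n. induction n as [|n [pi' [Hp' [E0 Hk]]]].
  - exists (fun _ => x2). split; [apply (@local_path _ R); intro; left; reflexivity|].
    split; auto. intros k Hk. assert (k = 0) by lia. subst; auto.
  - destruct (@fwd_step _ _ R V B HB _ _ _ (Hk n (le_n n)) (@path_local _ _ _ Hp n)) as [z [Hz Bz]].
    exists (fun k => if k <=? n then pi' k else z). split; [|split].
    + apply (@local_path _ R). intro m. pose proof (@path_local _ _ _ Hp' m).
      destruct (Nat.leb_spec m n); destruct (Nat.leb_spec (S m) n).
      * auto.
      * assert (m = n) by lia. subst; auto.
      * lia.
      * left; reflexivity.
    + simpl. auto.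
    + intros k Hkn. destruct (Nat.leb_spec k n); auto. assert (k = S n) by lia. subst; auto.
Qed.

Lemma bwd_build {X AP : Type} (R : X -> X -> Prop) (V : AP -> X -> Prop) B :
  is_bisim R V B -> forall pi, is_path R pi -> forall l x2, B (pi l) x2 ->
  forall d, exists pi', is_path R pi' /\ pi' l = x2 /\ forall k, l - d <= k <= l -> B (pi k) (pi' k).
Proof.
  intros HB pi Hp l x2 H0 d. induction d as [|d [pi' [Hp' [E0 Hk]]]].
  - exists (fun _ => x2). split; [apply (@local_path _ R); intro; left; reflexivity|].
    split; auto. intros k Hk. assert (k = l) by lia. subst; auto.
  - destruct (Nat.leb_spec l d).
    + exists pi'. split; auto. split; auto. intros k Hk'. apply Hk. lia.
    + set (j := l - S d).
      assert (Hj : S j = l - d) by (unfold j; lia).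
      destruct (@bwd_step _ _ R V B HB _ _ _ (Hk (S j) ltac:(lia)) (@path_local _ _ _ Hp j)) as [z [Hz Bz]].
      exists (fun k => if k <=? j then z else pi' k). split; [|split].
      * apply (@local_path _ R). intro m. pose proof (@path_local _ _ _ Hp' m).
        destruct (Nat.leb_spec m j); destruct (Nat.leb_spec (S m) j).
        -- left; reflexivity.
        -- assert (m = j) by lia. subst; auto.
        -- lia.
        -- auto.
      * destruct (Nat.leb_spec l j); [lia|auto].
      * intros k Hkn. destruct (Nat.leb_spec k j).
        -- assert (k = j) by lia. subst; auto.
        -- apply Hk. lia.
Qed.

Lemma key {X AP : Type} (R : X -> X -> Prop) (V : AP -> X -> Prop) B :
  is_bisim R V B -> forall phi a b, B a b -> sat R V a phi -> sat R V b phi.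
Proof.
  intros HB. pose proof HB as [_ [[Hr [Hs Ht]] HBB]].
  induction phi as [p|f IH|f IHf g IHg|f IHf g IHg|f IHf g IHg]; intros a b Hab; simpl.
  - intro H. apply (proj1 (HBB a b Hab) p). exact H.
  - intros H1 H2. apply H1. apply (IH b a); auto.
  - intros [H|H]; [left; apply (IHf a)|right; apply (IHg a)]; auto.
  - intros [pi [l [Hp [E0 [Hf Hg]]]]]. subst a.
    destruct (@fwd_build _ _ R V B HB _ Hp _ Hab l) as [pi' [Hp' [E' Hk]]].
    exists pi', l. repeat split; auto.
    + apply (IHf (pi l)); auto.
    + intros j H1 H2. apply (IHg (pi j)); auto. apply Hk; lia.
  - intros [pi [l [Hp [E0 [Hf Hg]]]]]. subst a.
    destruct (@bwd_build _ _ R V B HB _ Hp l _ Hab l) as [pi' [Hp' [E' Hk]]].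
    exists pi', l. repeat split; auto.
    + apply (IHf (pi 0)); auto. apply Hk; lia.
    + intros j H1 H2. apply (IHg (pi j)); auto. apply Hk; lia.
Qed.

Theorem lemma5 (X AP : Type) (R : X -> X -> Prop) (V : AP -> X -> Prop) (x1 x2 : X) :
  bisimilar R V x1 x2 -> slcs_equiv R V x1 x2.
Proof.
  intros [B [HB H12]] phi. pose proof HB as [_ [[_ [Hs _]] _]].
  split; apply key with (B := B); auto.
Qed.
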